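(* Let $\varepsilon=\varepsilon(n)$ satisfy $\varepsilon\le1$ and $n\varepsilon\to\infty$. In the variable-processor cup game on $n$ cups with $\varepsilon$ resource augmentation, suppose the emptier uses proportional emptying and the filler always places at least $1/n^2$ units of water into every cup in every round. Then there is a constant $C$ such that at any time $t$ the backlog is at most $C\varepsilon^{-1}\log n$ with probability at least $1-1/\mathrm{poly}(n)$ (high probability in $n$), against any adaptive filler.
   Context: Variable-processor cup game with $\varepsilon$ resource augmentation: nonnegative real fills, initially $0$; each round the filler chooses an integer $1\le p\le n$ and reals $q_1,\dots,q_n\in[0,1]$ with $\sum q_j=p$ and adds $q_j$ to cup $j$; then the emptier chooses $p$ distinct cups and replaces each of their fills $x$ by $\max(0,x-(1+\varepsilon))$. Backlog = maximum fill. The filler is adaptive (sees the outcomes of the emptier's previous random choices). Proportional emptying: in each round the emptier selects a random set of $p$ distinct cups such that each cup $j$ is included with probability exactly $q_j$ (such a distribution exists). *)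

(* Defs.v *)
From HB Require Import structures.
From mathcomp Require Import all_boot all_order all_algebra.
From mathcomp Require Import all_classical all_reals all_analysis.
Set Implicit Arguments. Unset Strict Implicit. Unset Printing Implicit Defensive.
Import Order.TTheory GRing.Theory Num.Theory.
Local Open Scope ring_scope.

(* Variable-processor cup game on n cups (cups = 'I_n).
   A history is the list of sets emptied so far, NEWEST FIRST. *)
Section Game.
Variables (R : realType) (n : nat).

Definition hist := seq {set 'I_n}.

(* A (deterministic, adaptive) filler strategy: from the history of the
   emptier's (random) choices it chooses the number of processors p and
   the amounts q_j added to the cups. *)
Definition filler := hist -> nat * ('I_n -> R).

Definition valid_move (p : nat) (q : 'I_n -> R) : Prop :=
  [/\ (1 <= p <= n)%N, forall j, 0 <= q j <= 1 & \sum_j q j = p%:R].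

Definition valid_filler (F : filler) : Prop :=
  forall h, valid_move (F h).1 (F h).2.

Definition lower_bounded (F : filler) : Prop :=
  forall h j, (n%:R ^+ 2)^-1 <= (F h).2 j.

(* An emptier: for each history, a probability distribution on subsets of
   cups to empty in the current round. *)
Definition emptier := hist -> {set 'I_n} -> R.

Definition proportional (F : filler) (D : emptier) : Prop :=
  forall h,
  [/\ forall A, 0 <= D h A,
      \sum_(A : {set 'I_n}) D h A = 1,
      forall A, D h A != 0 -> #|A| = (F h).1
    & forall j : 'I_n, \sum_(A : {set 'I_n} | j \in A) D h A = (F h).2 j].

Fixpoint fills (eps : R) (F : filler) (h : hist) : 'I_n -> R := fun j =>
  match h with
  | [::] => 0
  | A :: h' =>
      let y := fills eps F h' j + (F h').2 j in
      if j \in A then Num.max 0 (y - (1 + eps)) else y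
  end.

Fixpoint hprob (D : emptier) (h : hist) : R :=
  match h with
  | [::] => 1
  | A :: h' => D h' A * hprob D h'
  end.

Definition backlog_exceeds_prob (eps : R) (F : filler) (D : emptier)
    (t : nat) (B : R) : R :=
  \sum_(h : t.-tuple {set 'I_n})
     (if [exists j, B < fills eps F h j] then hprob D h else 0).

End Game.

(* Main.v *)
Require Import Defs.
From HB Require Import structures.
From mathcomp Require Import all_boot all_order all_algebra.
From mathcomp Require Import all_classical all_reals all_analysis.
From mathcomp Require Import ring lra.
Import Order.TTheory GRing.Theory Num.Theory.
Import numFieldNormedType.Exports.
Local Open Scope classical_set_scope.
Local Open Scope ring_scope.

Section S.
Variable R : realType.

Lemma expN_le (y : R) : 0 <= y -> expR (- y) * (1 + y) <= 1.
Proof.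
move=> y0; have h1 := expR_ge1Dx y.
have h2 : expR (- y) * expR y = 1 by rewrite -expRD addNr expR0.
have h3 := expR_gt0 (- y).
by rewrite -[X in _ <= X]h2 ler_wpM2l // ltW.
Qed.

Lemma gap (e : R) : 0 < e <= 1 ->
  e ^+ 2 / 12 <= 1 - expR (- (e / 4 * (1 + e))) - e / 4.
Proof.
move=> /andP [e0 e1].
set y := e / 4 * (1 + e).
have y0 : 0 <= y by rewrite /y; apply: mulr_ge0; lra.
have hz := @expN_le y y0. have hz0 := expR_gt0 (- y).
set z := expR (- y) in hz hz0 *.
have hy : y = (e + e^+2) / 4 by rewrite /y; field.
have hy1 : y <= 1/2 by rewrite hy; nra.
have key : (1 + y) * (e / 4 + e ^+ 2 / 12) <= y by rewrite hy; nra.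
nra.
Qed.

Lemma bracket (e q : R) : 0 < e <= 1 -> 0 <= q <= 1 ->
  q * expR (e / 4 * (q - (1 + e))) + (1 - q) * expR (e / 4 * q)
   <= expR (- (q * (e ^+ 2 / 12))).
Proof.
move=> he /andP [q0 q1].
have ga := gap e he.
set a := 1 - expR (- (e / 4 * (1 + e))) in ga *.
have -> : q * expR (e / 4 * (q - (1 + e))) + (1 - q) * expR (e / 4 * q)
   = expR (e / 4 * q) * (1 - q * a).
  have -> : e / 4 * (q - (1 + e)) = e / 4 * q + - (e / 4 * (1 + e)) by ring.
  rewrite /a expRD; ring.
have h1 : 1 - q * a <= expR (- (q * a)) by have := expR_ge1Dx (- (q * a)); lra.
apply: (le_trans (ler_wpM2l (expR_ge0 _) h1)).
rewrite -expRD ler_expR.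
have ga2 : 0 <= a - e / 4 - e ^+ 2 / 12 by lra.
have := mulr_ge0 q0 ga2. lra.
Qed.

Lemma step (n : nat) (e x q : R) (j : 'I_n) (D' : {set 'I_n} -> R) :
  0 < e <= 1 -> (n%:R ^+ 2)^-1 <= q -> q <= 1 ->
  (forall A, 0 <= D' A) -> \sum_A D' A = 1 -> \sum_(A : {set 'I_n} | j \in A) D' A = q ->
  \sum_A D' A * expR (e / 4 * (if j \in A then Num.max 0 (x + q - (1 + e)) else x + q))
   <= expR (- ((n%:R ^+ 2)^-1 * (e ^+ 2 / 12))) * expR (e / 4 * x) + 1.
Proof.
move=> he hq q1 D0 D1 Dj.
have hn0 : 0 <= (n%:R ^+ 2)^-1 :> R by rewrite invr_ge0 exprn_ge0.
have q0 : 0 <= q by apply: le_trans hq.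
have Dnj : \sum_(A : {set 'I_n} | j \notin A) D' A = 1 - q.
  move: D1; rewrite (bigID (fun A : {set 'I_n} => j \in A)) /= Dj. lra.
rewrite (bigID (fun A : {set 'I_n} => j \in A)) /=.
rewrite (eq_bigr (fun A : {set 'I_n} => D' A * expR (e / 4 * Num.max 0 (x + q - (1 + e))))); last first.
  by move=> A ->.
rewrite [X in _ + X <= _](eq_bigr (fun A : {set 'I_n} => D' A * expR (e / 4 * (x + q)))); last first.
  by move=> A /negbTE ->.
rewrite -!big_distrl /= Dj Dnj.
have v1 : expR (e / 4 * Num.max 0 (x + q - (1 + e))) <= 1 + expR (e / 4 * (x + q - (1 + e))).
  case: (leP 0 (x + q - (1 + e))) => _.
      by rewrite lerDr.
  by rewrite mulr0 expR0 lerDl expR_ge0.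
have hq01 : 0 <= q <= 1 by rewrite q0 q1.
have hb := bracket e q he hq01.
have hr : expR (- (q * (e ^+ 2 / 12))) <= expR (- ((n%:R ^+ 2)^-1 * (e ^+ 2 / 12))).
  rewrite ler_expR lerN2; apply: ler_wpM2r => //.
  by apply: divr_ge0 => //; apply: exprn_ge0; case/andP: he => /ltW.
have ex0 := expR_gt0 (e / 4 * x).
have E1 : expR (e / 4 * (x + q - (1 + e))) = expR (e / 4 * x) * expR (e / 4 * (q - (1 + e))).
  by rewrite -expRD; congr expR; ring.
have E2 : expR (e / 4 * (x + q)) = expR (e / 4 * x) * expR (e / 4 * q).
  by rewrite -expRD; congr expR; ring.
rewrite E2 in v1 *; rewrite E1 in v1.
set r := expR (- ((n%:R ^+ 2)^-1 * (e ^+ 2 / 12))) in hr *.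
set X := expR (e / 4 * x) in ex0 v1 E1 E2 *.
set u := expR (e / 4 * (q - (1 + e))) in v1 hb *.
set w := expR (e / 4 * q) in hb *.
set v := expR (e / 4 * Num.max 0 (x + q - (1 + e))) in v1 *.
have hq1 : 0 <= 1 - q by lra.
have := ler_wpM2l q0 v1.
have : X * (q * u + (1 - q) * w) <= X * r.
  by apply: ler_wpM2l; [exact: ltW | exact: le_trans hb hr].
nra.
Qed.
End S.

Section G.
Variables (R : realType) (n : nat).
Lemma tup_split t (f : seq {set 'I_n} -> R) :
  \sum_(h : t.+1.-tuple {set 'I_n}) f h =
  \sum_(h : t.-tuple {set 'I_n}) \sum_(A : {set 'I_n}) f (A :: h).
Proof.
rewrite exchange_big pair_big /=.
rewrite (reindex (fun p : {set 'I_n} * t.-tuple {set 'I_n} => [tuple of p.1 :: p.2])) //=.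
exists (fun h : t.+1.-tuple {set 'I_n} => (thead h, [tuple of behead h])).
  move=> [A h] _ /=. rewrite /thead (tnth_nth A) /=. congr pair. by apply: val_inj.
move=> h _; rewrite [in RHS](tuple_eta h). by apply: val_inj.
Qed.

Variables (e : R) (F : filler R n) (D : emptier R n).
Hypotheses (he : 0 < e <= 1) (HF : valid_filler F) (HL : lower_bounded F)
  (HP : proportional F D).

Lemma hprob_ge0 (h : hist n) : 0 <= hprob D h.
Proof.
elim: h => [|A h IH] /=; first exact: ler01.
by case: (HP h) => D0 _ _ _; apply: mulr_ge0.
Qed.

Lemma tup0 (f : seq {set 'I_n} -> R) :
  \sum_(h : 0.-tuple {set 'I_n}) f h = f [::].
Proof.
rewrite (big_pred1 [tuple]) //= => h; rewrite /= [h]tuple0; symmetry; exact: eqxx.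
Qed.

Lemma hprob_sum t : \sum_(h : t.-tuple {set 'I_n}) hprob D h = 1.
Proof.
elim: t => [|t IH]; first by rewrite tup0.
rewrite tup_split -[RHS]IH; apply: eq_bigr => h _ /=.
rewrite -big_distrl /=; case: (HP h) => _ -> _ _; exact: mul1r.
Qed.

Definition rr := expR (- ((n%:R ^+ 2)^-1 * (e ^+ 2 / 12))).
Definition MM := 1 + ((n%:R ^+ 2)^-1 * (e ^+ 2 / 12))^-1.

Lemma MM_ok : (0 < n)%N -> rr * MM + 1 <= MM.
Proof.
move=> n0.
have e0 : 0 < e by case/andP: he.
have x0 : 0 < (n%:R ^+ 2)^-1 * (e ^+ 2 / 12) :> R.
  apply: mulr_gt0; first by rewrite invr_gt0 exprn_gt0 // ltr0n.
  by apply: divr_gt0 => //; apply: exprn_gt0.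
have := @expN_le R _ (ltW x0).
rewrite /rr /MM; set x := _ * _ in x0 *; set r := expR _.
have r0 : 0 <= r by apply: expR_ge0.
move=> hr.
have -> : r * (1 + x^-1) + 1 = (r * (1 + x)) / x + 1 by field; lra.
rewrite addrC lerD2l ler_pdivrMr // mulVf // gt_eqF //.
Qed.

Lemma phi_bound (j : 'I_n) t : (0 < n)%N ->
  \sum_(h : t.-tuple {set 'I_n}) hprob D h * expR (e / 4 * fills e F h j) <= MM.
Proof.
move=> n0; elim: t => [|t IH].
  rewrite (tup0 (fun h => hprob D h * expR (e / 4 * fills e F h j))) /= mulr0 expR0 mulr1 /MM lerDl invr_ge0.
  apply: mulr_ge0; first by rewrite invr_ge0 exprn_ge0.
  by apply: divr_ge0 => //; apply: exprn_ge0; case/andP: he => /ltW.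
rewrite (tup_split t (fun h => hprob D h * expR (e / 4 * fills e F h j))).
have hrr : 0 <= rr by exact: expR_ge0.
apply: le_trans (MM_ok n0); apply: le_trans (lerD (ler_wpM2l hrr IH) (lexx 1)).
rewrite big_distrr /= -[X in _ <= _ + X](hprob_sum t) -big_split /=.
apply: ler_sum => h _ /=.
have -> : \sum_A D h A * hprob D h *
     expR (e / 4 * (if j \in A then Num.max 0 (fills e F h j + (F h).2 j - (1 + e))
        else fills e F h j + (F h).2 j))
  = hprob D h * \sum_A D h A *
     expR (e / 4 * (if j \in A then Num.max 0 (fills e F h j + (F h).2 j - (1 + e))
        else fills e F h j + (F h).2 j)).
  by rewrite big_distrr; apply: eq_bigr => A _ /=; ring.
have -> : forall a b c : R, a * (b * c) + b = b * (a * c + 1) by move=> a b c; ring.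
apply: ler_wpM2l; first exact: hprob_ge0.
case: (HF h) => _ /(_ j) /andP [_ q1] _.
case: (HP h) => D0 D1 _ Dj.
exact: step he (HL h j) q1 D0 D1 (Dj j).
Qed.

Lemma backlog_bound t B : (0 < n)%N ->
  backlog_exceeds_prob e F D t B <= n%:R * MM * expR (- (e / 4 * B)).
Proof.
move=> n0; have e0 : 0 < e by case/andP: he.
rewrite /backlog_exceeds_prob.
apply: (@le_trans _ _ (\sum_(h : t.-tuple {set 'I_n}) \sum_(j : 'I_n)
   hprob D h * expR (e / 4 * fills e F h j) * expR (- (e / 4 * B)))).
  apply: ler_sum => h _.
  have hp := hprob_ge0 h.
  case: existsP => [[j0 hj0]|_]; last first.
    by apply: sumr_ge0 => j _; apply: mulr_ge0; [apply: mulr_ge0 | ]; rewrite ?expR_ge0.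
  rewrite (bigD1 j0) //=.
  rewrite -[X in X <= _]addr0; apply: lerD; last first.
    by apply: sumr_ge0 => j _; apply: mulr_ge0; [apply: mulr_ge0 | ]; rewrite ?expR_ge0.
  rewrite -mulrA -expRD.
  have : 1 <= expR (e / 4 * fills e F h j0 + - (e / 4 * B)).
    rewrite -[X in X <= _]expR0 ler_expR subr_ge0; apply: ler_wpM2l; last exact: ltW.
    lra.
  move=> h1; have := ler_wpM2l hp h1; by rewrite mulr1.
rewrite exchange_big /=.
apply: (@le_trans _ _ (\sum_(j : 'I_n) MM * expR (- (e / 4 * B)))).
  apply: ler_sum => j _; rewrite -big_distrl /=.
  by apply: ler_wpM2r; [apply: expR_ge0 | apply: phi_bound].
rewrite sumr_const card_ord.
have -> : forall a : R, a *+ n = n%:R * a by move=> a; rewrite mulr_natl.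
by rewrite mulrA.
Qed.
End G.

Section Lim.
Variable R : realType.
Lemma lim1 (eps : nat -> R) : (fun n => n%:R * eps n) @ \oo --> +oo ->
  exists N : nat, forall n, (N <= n)%N -> 1 <= n%:R * eps n.
Proof.
move=> H. have := (cvgryPge _).1 H 1. case=> N /= _ HN. exists N => n /HN. done.
Qed.
End Lim.

Theorem lemma7p4 (R : realType) (eps : nat -> R) :
  (forall n, eps n <= 1) ->
  (fun n => n%:R * eps n) @ \oo --> +oo ->
  forall c : nat, exists C : R, exists N : nat,
  forall n : nat, (N <= n)%N ->
  forall (F : filler R n) (D : emptier R n),
    valid_filler F -> lower_bounded F -> proportional F D ->
    forall t : nat,
      backlog_exceeds_prob (eps n) F D t (C * (eps n)^-1 * ln n%:R)
        <= (n%:R ^+ c)^-1.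
Proof.
move=> He1 Hlim c.
have [N0 HN0] := @lim1 R eps Hlim.
exists (4 * (c + 9)%:R), (maxn N0 2) => n hn F D HF HL HP t.
have hn2 : (2 <= n)%N by apply: leq_trans hn; exact: leq_maxr.
have hne : 1 <= n%:R * eps n by apply: HN0; apply: leq_trans hn; exact: leq_maxl.
have n0 : (0 < n)%N by apply: leq_trans hn2.
set m : R := n%:R in hne *.
have m2 : 2 <= m by rewrite /m (ler_nat R 2 n).
set e := eps n in hne *.
have e0 : 0 < e.
  case: (ltP 0 e) => // he0; exfalso.
  have : m * e <= 0 by apply: mulr_ge0_le0 => //; lra.
  lra.
have he : 0 < e <= 1 by rewrite e0 He1.
apply: (le_trans (@backlog_bound R n e F D he HF HL HP t (4 * (c + 9)%:R / e * ln m) n0)).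
rewrite -/m.
have mpos : 0 < m by lra.
have -> : e / 4 * (4 * (c + 9)%:R * e^-1 * ln m) = (c + 9)%:R * ln m.
  by field; apply/eqP; lra.
rewrite expRN expRM_natl lnK; last by rewrite posrE.
rewrite exprD invfM.
set P := m ^+ c.
have P0 : 0 < P by rewrite exprn_gt0.
have hie : e^-1 * e = 1 by rewrite mulVf //; apply/eqP; lra.
have ie0 : 0 < e^-1 by rewrite invr_gt0.
have iem : e^-1 <= m by nra.
have hMM : MM R n e = 1 + 12 * m ^+ 2 * (e^-1) ^+ 2.
  by rewrite /MM -/m; field; apply/andP; split; apply/eqP; lra.
have hMM2 : MM R n e <= 1 + 12 * m ^+ 4.
  rewrite hMM lerD2l; have : (e^-1) ^+ 2 <= m ^+ 2 by rewrite !expr2; nra.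
  rewrite (_ : m ^+ 4 = m ^+ 2 * m ^+ 2); last by rewrite -exprD.
  have : 0 <= m ^+ 2 by rewrite exprn_ge0 // ltW.
  nra.
have hQ : m * MM R n e <= m ^+ 9.
  have -> : m ^+ 9 = m ^+ 4 * m ^+ 4 * m by rewrite -!exprD -exprSr.
  have m4 : 16 <= m ^+ 4.
    have -> : m ^+ 4 = (m ^+ 2) ^+ 2 by rewrite -exprM.
    have h4 : 4 <= m * m by nra.
    rewrite !expr2; nra.
  set k := m ^+ 4 in hMM2 m4 *.
  have h1 : m * MM R n e <= m * (1 + 12 * k) by apply: ler_wpM2l => //; lra.
  have h2 : 1 + 12 * k <= k * k by nra.
  have h3 : m * (1 + 12 * k) <= m * (k * k) by apply: ler_wpM2l => //; lra.
  lra.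
have Q0 : 0 < m ^+ 9 by rewrite exprn_gt0.
have -> : m * MM R n e * (P^-1 / m ^+ 9) = P^-1 * (m * MM R n e / m ^+ 9) by ring.
rewrite -[X in _ <= X]mulr1; apply: ler_wpM2l; first by rewrite invr_ge0 ltW.
by rewrite ler_pdivrMr // mul1r.
Qed.
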